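(* Let $\{\mathbf Z_i(n), i\in\mathbb N\}$ be a critical GWBP/$\infty$ with mean matrix $\mathbf M\in\mathcal M_1^0$ and $\mathbf F(\mathbf s)\neq\mathbf M\mathbf s$. For each $i$ define $\epsilon_{1,i}(\mathbf Q(n;\mathbf s))$ by $$\sum_{j\in\mathbb N}Q_j(n;\mathbf s)\,N_{ij}\big(\mathbf F(n;\mathbf s)\big)=M_i\,\epsilon_{1,i}(\mathbf Q(n;\mathbf s)).$$ Then $$\lim_{n\to\infty}\sup_{\mathbf s\in\mathbf S,\ i\in\mathbb N}\frac{|\epsilon_{1,i}(\mathbf Q(n;\mathbf s))|}{\mathcal Q(n;\mathbf s)}=0.$$
   Context: A GWBP/$\infty$ has types $\mathbb N=\{1,2,\dots\}$. Each particle lives one unit of time; a type-$i$ particle produces, independently of everything else, a random vector $\mathbf Z_i=(Z_{ij})_{j\in\mathbb N}$ of children, with $Z_i:=\sum_jZ_{ij}<\infty$ a.s. $\mathbf Z_i(n)=(Z_{ij}(n))_j$ is the generation-$n$ population from one type-$i$ particle. For $\mathbf s\in[0,1]^{\mathbb N}$: $F_i(n;\mathbf s)=\mathbb E\prod_js_j^{Z_{ij}(n)}$, $F_i(\mathbf s)=F_i(1;\mathbf s)$, $\mathbf F(n;\mathbf s)=(F_i(n;\mathbf s))_i$, $Q_i(n;\mathbf s)=1-F_i(n;\mathbf s)$, $\mathbf Q(n;\mathbf s)=(Q_i(n;\mathbf s))_i$, $\mathcal Q(n;\mathbf s)=\sup_iQ_i(n;\mathbf s)$, $N_{ij}(\mathbf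 s)=\mathbb E\big[\sum_{k=0}^{Z_{ij}-1}s_j^k\big(1-\prod_{l=j+1}^\infty s_l^{Z_{il}}\big)\big]$. $\mathbf S=\{\mathbf s\in[0,1]^{\mathbb N}:\mathbf s\neq\mathbf 1\}$. ''$\mathbf F(\mathbf s)\neq\mathbf M\mathbf s$'' means it is not true that $F_i(\mathbf s)=\sum_jM_{ij}s_j$ for all $i,\mathbf s$. Mean matrix $\mathbf M=(M_{ij})$, $M_{ij}=\mathbb EZ_{ij}$, $M^{(n)}_{ij}=\mathbb EZ_{ij}(n)$, $M_i=\sum_jM_{ij}=\mathbb EZ_i$. Irreducible: for all $i,j$ some $M^{(n)}_{ij}>0$; aperiodic: gcd of such $n$ is 1; then $\lim_n(M^{(n)}_{ij})^{1/n}=1/R$ for a common $R$; critical: $R=1$. $\mathbf M\in\mathcal M_1$ means: (i) irreducible, aperiodic, $R=1$, 1-recurrent ($\sum_nM^{(n)}_{ij}=\infty$) and 1-positive ($\lim_nM^{(n)}_{ij}>0$ for all $i,j$); then there are positive eigenvectors $\mathbf v\mathbf M=\mathbf v$, $\mathbf M\mathbf u^T=\mathbf u^T$, unique up to positive multiples, normalized with $\sum_jv_ju_j=1$; (ii) $\sum_jv_j=1$ and $U:=\sup_iu_i<\infty$; (iii) $\lim_{N\to\infty}\sup_iM_i^{-1}\sum_{j>N}M_{ij}=0$ and $\lim_{K\to\infty}\sup_iM_i^{-1}\mathbb E[Z_i;Z_i>K]=0$. $\mathbf M\in\mathcal M_1^0$: $\mathbf M\in\mathcal M_1$ and (iv)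 there exist $m\in\mathbb N$, $c,C>0$ with $M_{ij}<Cu_iv_j$ and $M^{(m)}_{1j}>cv_j$ for all $i,j$. *)

(* Defs.v *)
From mathcomp Require Import all_boot all_order all_algebra.
From mathcomp Require Import all_classical all_reals all_analysis.
Set Implicit Arguments. Unset Strict Implicit. Unset Printing Implicit Defensive.
Import Order.TTheory GRing.Theory Num.Theory.
Import numFieldNormedType.Exports.
Local Open Scope ring_scope.
Local Open Scope classical_set_scope.

(* Types are indexed by nat = {0,1,2,...} (type k of the paper is k-1 here).
   An offspring vector Z_i = (Z_ij)_j is encoded by a list z : seq nat with
   Z_ij = nth 0 z j (so Z_i = sumn z < oo automatically).
   The offspring law of type i is a probability mass function p i on seq nat. *)

Section GW.
Variable R : realType.
Variable p : nat -> seq nat -> R.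

Definition is_offspring_law : Prop :=
  (forall i z, 0 <= p i z) /\
  (forall i, (\esum_(z in [set: seq nat]) (p i z)%:E = 1)%E).

(* E[ g(Z_i) ] for nonnegative g, in the extended reals *)
Definition Ex (i : nat) (g : seq nat -> R) : \bar R :=
  \esum_(z in [set: seq nat]) (p i z * g z)%:E.

Definition F1 (s : nat -> R) (i : nat) : R :=
  fine (Ex i (fun z => \prod_(j < size z) s j ^+ nth 0 z j)).

Definition Fn (n : nat) (s : nat -> R) : nat -> R := iter n F1 s.

Definition Qn (n : nat) (s : nat -> R) (i : nat) : R := 1 - Fn n s i.

Definition Qsup (n : nat) (s : nat -> R) : R := sup [set Qn n s i | i in [set: nat]].

Definition Mbar (i j : nat) : \bar R := Ex i (fun z => (nth 0 z j)%:R).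
Definition Mi (i : nat) : \bar R := Ex i (fun z => (sumn z)%:R).

Fixpoint Mpow (n : nat) (i j : nat) : \bar R :=
  match n with
  | 0 => (if i == j then 1 else 0)%:E
  | m.+1 => (\esum_(k in [set: nat]) (Mpow m i k * Mbar k j))%E
  end.

Definition Nbar (i j : nat) (s : nat -> R) : \bar R :=
  Ex i (fun z => (\sum_(k < nth 0 z j) s j ^+ k) *
                 (1 - \prod_(l < size z | (j < l)%N) s l ^+ nth 0 z l)).

Definition eps1 (n : nat) (s : nat -> R) (i : nat) : R :=
  fine (\esum_(j in [set: nat]) ((Qn n s j)%:E * Nbar i j (Fn n s))%E) / fine (Mi i).

Definition unit_cube (s : nat -> R) : Prop := forall j, 0 <= s j <= 1.

Definition Sset : set (nat -> R) := [set s | unit_cube s /\ s <> (fun _ => 1)].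

Definition in_M1 (v u : nat -> R) : Prop :=
  (forall i j, exists n, (0 < Mpow n.+1 i j)%E) /\
  (forall i d, (forall n, (0 < n)%N -> (0 < Mpow n i i)%E -> (d %| n)%N) -> d = 1%N) /\
  (forall i j, (fun n => fine (Mpow n i j) `^ (n%:R)^-1) @ \oo --> (1 : R)) /\
  (forall i j, (\esum_(n in [set: nat]) Mpow n i j)%E = +oo%E) /\
  (forall i j, exists l : R, 0 < l /\ (fun n => fine (Mpow n i j)) @ \oo --> l) /\
  (forall j, 0 < v j) /\ (forall i, 0 < u i) /\
  (forall j, (\esum_(i in [set: nat]) ((v i)%:E * Mbar i j))%E = (v j)%:E) /\
  (forall i, (\esum_(j in [set: nat]) (Mbar i j * (u j)%:E))%E = (u i)%:E) /\
  (\esum_(j in [set: nat]) (v j * u j)%:E)%E = 1%E /\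
  (\esum_(j in [set: nat]) (v j)%:E)%E = 1%E /\
  (exists U : R, forall i, u i <= U) /\
  (forall e : R, 0 < e -> \forall N \near \oo, forall i,
      (\esum_(j in [set j | (N < j)%N]) Mbar i j <= e%:E * Mi i)%E) /\
  (forall e : R, 0 < e -> \forall K \near \oo, forall i,
      (Ex i (fun z => ((sumn z)%:R * (K < sumn z)%N%:R)%R) <= e%:E * Mi i)%E).

Definition in_M10 (v u : nat -> R) : Prop :=
  in_M1 v u /\
  exists (m : nat) (c C : R), 0 < c /\ 0 < C /\
    (forall i j, (Mbar i j < (C * u i * v j)%:E)%E) /\
    (forall j, ((c * v j)%:E < Mpow m 0 j)%E).

Definition F_not_linear : Prop :=
  ~ (forall i s, unit_cube s ->
       F1 s i = fine (\esum_(j in [set: nat]) (Mbar i j * (s j)%:E))%E).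

End GW.

(* Main.v *)
Require Import Defs.
From mathcomp Require Import all_boot all_order all_algebra.
From mathcomp Require Import all_classical all_reals all_analysis.
From mathcomp Require Import ring lra.
Import Order.TTheory GRing.Theory Num.Theory.
Import numFieldNormedType.Exports.
Local Open Scope ring_scope.
Local Open Scope classical_set_scope.
Set Implicit Arguments. Unset Strict Implicit.
Section Aux.
Variable R : realType.
Local Open Scope ereal_scope.

Lemma esumZl (T : choiceType) (I : set T) (a : T -> \bar R) (r : R) :
  (0 <= r)%R -> (forall i, I i -> 0 <= a i) ->
  \esum_(i in I) (r%:E * a i) = r%:E * \esum_(i in I) a i.
Proof.
move=> r0 a0; rewrite /esum -ereal_supZl //; last first.
  by apply/set0P; exists 0; exists set0; [exact: fsets_set0|rewrite fsbig_set0].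
have key A : fsets I A -> \sum_(i \in A) r%:E * a i = r%:E * \sum_(i \in A) a i.
  move=> [finA AI]; rewrite !fsbig_finite // big_seq [in RHS]big_seq.
  by rewrite ge0_sume_distrr // => i; rewrite in_fset_set // inE => /AI /a0.
congr ereal_sup; apply/seteqP; split => x /=.
- move=> [A AI <-]; exists (\sum_(i \in A) a i); first by exists A.
  by rewrite key.
- by move=> [y [A AI <-] <-]; exists A => //; rewrite key.
Qed.

Lemma esum_swap (T1 T2 : choiceType) (a : T1 -> T2 -> \bar R) :
  (forall i j, 0 <= a i j) ->
  \esum_(i in [set: T1]) \esum_(j in [set: T2]) a i j =
  \esum_(j in [set: T2]) \esum_(i in [set: T1]) a i j.
Proof.
move=> a0; rewrite !esum_esum //.
rewrite (@reindex_esum R _ _ ([set: T2] `*`` (fun _ => [set: T1]))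
  ([set: T1] `*`` (fun _ => [set: T2])) (fun x : T2 * T1 => (x.2, x.1))) //.
split.
- by move=> [x y] /=.
- by move=> [x y] [x' y'] _ _ [-> ->].
- by move=> [x y] _; exists (y, x).
Qed.

Lemma esum_nat_fin (f : nat -> \bar R) (n : nat) :
  (forall j, 0 <= f j) -> (forall j, (n <= j)%N -> f j = 0) ->
  \esum_(j in [set: nat]) f j = \sum_(j < n) f j.
Proof.
move=> f0 fn; rewrite fsbig_ord -esum_fset; [|exact: finite_II|by []].
rewrite [RHS]esum_mkcond; apply: eq_esum => j _.
case: ifPn => // /negP; rewrite inE /= => /negP; rewrite -leqNgt => /fn //.
Qed.
End Aux.
Section GWP.
Variable R : realType.
Variable p : nat -> seq nat -> R.
Hypothesis Hp : is_offspring_law p.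
Local Open Scope ereal_scope.

Let p0 i z : (0 <= p i z)%R. Proof. by case: Hp. Qed.
Let p1 i : \esum_(z in [set: seq nat]) (p i z)%:E = 1. Proof. by case: Hp. Qed.

Lemma Ex_ge0 i g : (forall z, 0 <= g z)%R -> 0 <= Ex p i g.
Proof. by move=> g0; apply: esum_ge0 => z _; rewrite lee_fin mulr_ge0. Qed.

Lemma Ex_le i g h : (forall z, g z <= h z)%R -> Ex p i g <= Ex p i h.
Proof. by move=> gh; apply: le_esum => z _; rewrite lee_fin ler_wpM2l. Qed.

Lemma ExZ i g c : (0 <= c)%R -> (forall z, 0 <= g z)%R ->
  Ex p i (fun z => c * g z)%R = c%:E * Ex p i g.
Proof.
move=> c0 g0; rewrite /Ex -esumZl //; last by move=> z _; rewrite lee_fin mulr_ge0.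
by apply: eq_esum => z _; rewrite -EFinM mulrCA.
Qed.

Lemma Ex_cst i c : (0 <= c)%R -> Ex p i (fun _ => c) = c%:E.
Proof.
move=> c0; rewrite -[X in Ex _ _ X](funext (fun z => mulr1 c)) ExZ //.
by rewrite /Ex (eq_esum (b := fun z => (p i z)%:E)) ?p1 ?mule1 // => z _; rewrite mulr1.
Qed.

Lemma ExD i g h : (forall z, 0 <= g z)%R -> (forall z, 0 <= h z)%R ->
  Ex p i (fun z => g z + h z)%R = Ex p i g + Ex p i h.
Proof.
move=> g0 h0; rewrite /Ex -esumD; last 2 first.
- by move=> z _; rewrite lee_fin mulr_ge0.
- by move=> z _; rewrite lee_fin mulr_ge0.
by apply: eq_esum => z _; rewrite mulrDr.
Qed.

Lemma Ex_bnd i g c : (forall z, 0 <= g z <= c)%R -> 0 <= Ex p i g <= c%:E.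
Proof.
move=> gc; have c0 : (0 <= c)%R by case/andP: (gc [::]) => /le_trans; apply.
rewrite Ex_ge0 /=; last by move=> z; case/andP: (gc z).
by rewrite -(Ex_cst i c0); apply: Ex_le => z; case/andP: (gc z).
Qed.

Lemma Ex_fin i g c : (forall z, 0 <= g z <= c)%R -> Ex p i g = (fine (Ex p i g))%:E.
Proof.
move=> gc0; have /andP[g0 gc] := Ex_bnd i gc0; rewrite fineK // ge0_fin_numE //.
exact: (le_lt_trans gc (ltry _)).
Qed.

Lemma Ex_sub i g h c : (forall z, 0 <= g z)%R -> (forall z, g z <= h z <= c)%R ->
  (fine (Ex p i h) - fine (Ex p i g))%R = fine (Ex p i (fun z => h z - g z)%R).
Proof.
move=> g0 ghc.
have hb z : (0 <= h z <= c)%R by case/andP: (ghc z) => gh ->; rewrite (le_trans (g0 z)).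
have gb z : (0 <= g z <= c)%R by case/andP: (ghc z) => gh hc; rewrite g0 (le_trans gh).
have db z : (0 <= h z - g z <= c)%R.
  case/andP: (ghc z) => gh hc; rewrite subr_ge0 gh /=.
  by rewrite (le_trans _ hc) // lerBlDr lerDl.
have : Ex p i h = Ex p i g + Ex p i (fun z => h z - g z)%R.
  by rewrite -ExD //; [apply: eq_esum => z _; rewrite addrC subrK|move=> z; case/andP: (db z)].
rewrite (Ex_fin _ hb) (Ex_fin _ gb) (Ex_fin _ db) -EFinD => -[->].
by rewrite addrAC subrr add0r.
Qed.

Definition pr (s : nat -> R) (z : seq nat) := (\prod_(j < size z) s j ^+ nth 0 z j)%R.

Lemma pr_01 s z : unit_cube s -> (0 <= pr s z <= 1)%R.
Proof.
move=> sc; rewrite /pr prodr_ge0 /= ?prodr_ile1 // => j _;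
  case/andP: (sc j) => s0 s1; rewrite ?exprn_ge0 ?exprn_ile1 //.
Qed.

Lemma pr_mono s t z : unit_cube s -> (forall j, s j <= t j)%R -> (pr s z <= pr t z)%R.
Proof.
move=> sc st; rewrite /pr ler_prod // => j _; case/andP: (sc j) => s0 _.
by rewrite exprn_ge0 //= lerXn2r // ?nnegrE // (le_trans s0).
Qed.

Lemma F1E s i : F1 p s i = fine (Ex p i (pr s)). Proof. by []. Qed.

Lemma F1_cube s : unit_cube s -> unit_cube (F1 p s).
Proof.
move=> sc i; rewrite F1E; have := Ex_bnd i (fun z => pr_01 z sc).
move=> /andP[a b]; rewrite fine_ge0 //= -lee_fin -(Ex_fin _ (fun z => pr_01 z sc)) //.
Qed.

Lemma F1_mono s t i : unit_cube s -> unit_cube t -> (forall j, s j <= t j)%R ->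
  (F1 p s i <= F1 p t i)%R.
Proof.
move=> sc tc st; rewrite !F1E -lee_fin -(Ex_fin _ (fun z => pr_01 z sc)).
by rewrite -(Ex_fin _ (fun z => pr_01 z tc)); apply: Ex_le => z; apply: pr_mono.
Qed.

Lemma FnS n s : Fn p n.+1 s = F1 p (Fn p n s). Proof. by []. Qed.

Lemma Fn_cube n s : unit_cube s -> unit_cube (Fn p n s).
Proof. by move=> sc; elim: n => //= n IH; apply: F1_cube. Qed.

Lemma Fn_mono n s t : unit_cube s -> unit_cube t -> (forall j, s j <= t j)%R ->
  forall i, (Fn p n s i <= Fn p n t i)%R.
Proof.
move=> sc tc; elim: n => [//|n IH] st i; rewrite !FnS.
by apply: F1_mono; [exact: Fn_cube|exact: Fn_cube|exact: IH].
Qed.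

Definition zero : nat -> R := fun _ => 0%R.
Lemma zero_cube : unit_cube zero. Proof. by move=> j; rewrite /zero lexx ler01. Qed.

Lemma Fn0_incr n i : (Fn p n zero i <= Fn p n.+1 zero i)%R.
Proof.
rewrite FnS; elim: n i => [|n IH] i.
  by rewrite /=; case/andP: (F1_cube zero_cube i).
rewrite !FnS; apply: F1_mono; [exact: (Fn_cube n zero_cube)|exact: (Fn_cube n.+1 zero_cube)|exact: IH].
Qed.

End GWP.
Section Ineq.
Variable R : realType.

Lemma pow_diff (a b : R) k : 0 <= b -> b <= a -> a <= 1 ->
  a ^+ k - b ^+ k <= k%:R * (a - b).
Proof.
move=> b0 ba a1; elim: k => [|k IH]; first by rewrite !expr0 subrr mul0r.
have a0 : 0 <= a by apply: le_trans ba.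
rewrite !exprS.
have -> : a * a ^+ k - b * b ^+ k = a * (a ^+ k - b ^+ k) + b ^+ k * (a - b) by ring.
have h1 : a * (a ^+ k - b ^+ k) <= a ^+ k - b ^+ k.
  rewrite ler_piMl // subr_ge0 lerXn2r // ?nnegrE //.
have h2 : b ^+ k * (a - b) <= a - b.
  rewrite ler_piMl // ?subr_ge0 // exprn_ile1 // (le_trans ba a1) //.
rewrite mulrSr mulrDl mul1r; apply: le_trans (lerD h1 h2) _.
by rewrite lerD2r.
Qed.

Lemma prod_diff n (x y : nat -> R) : (forall j, 0 <= y j /\ y j <= x j /\ x j <= 1) ->
  \prod_(j < n) x j - \prod_(j < n) y j <= \sum_(j < n) (x j - y j).
Proof.
move=> h; elim: n => [|n IH]; first by rewrite !big_ord0 subrr.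
rewrite !big_ord_recr /=.
have [y0 [yx x1]] := h n.
set X := \prod_(j < n) x j; set Y := \prod_(j < n) y j.
have Y0 : 0 <= Y by apply: prodr_ge0 => j _; case: (h j).
have YX : Y <= X by apply: ler_prod => j _; case: (h j) => -> [].
have X1 : X <= 1.
  apply: prodr_ile1 => j _; case: (h j) => a [b c]; rewrite c andbT (le_trans a b) //.
have -> : X * x n - Y * y n = x n * (X - Y) + Y * (x n - y n) by ring.
apply: lerD.
  rewrite (le_trans _ IH) // ler_piMl // subr_ge0 //; exact: (le_trans y0 yx).
by rewrite ler_piMl // ?subr_ge0 // (le_trans YX X1).
Qed.

Lemma pr_diff (a b : nat -> R) (z : seq nat) :
  (forall j, 0 <= b j /\ b j <= a j /\ a j <= 1) ->
  pr a z - pr b z <= \sum_(j < size z) (nth 0%N z j)%:R * (a j - b j).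
Proof.
move=> h; rewrite /pr.
apply: le_trans (prod_diff (size z) (x := fun j => a j ^+ nth 0%N z j)
   (y := fun j => b j ^+ nth 0%N z j) _) _.
  move=> j; case: (h j) => b0 [ba a1]; split; first exact: exprn_ge0.
  split; first by rewrite lerXn2r // ?nnegrE // (le_trans b0).
  by rewrite exprn_ile1 // (le_trans b0).
apply: ler_sum => j _; case: (h j) => b0 [ba a1]; exact: pow_diff.
Qed.

Lemma pow_strict (b : R) k : 0 <= b -> b < 1 ->
  [/\ 0 <= b ^+ k, b ^+ k <= 1, (0 < k)%N -> b ^+ k < 1,
      1 - b ^+ k <= k%:R * (1 - b) & (1 < k)%N -> 1 - b ^+ k < k%:R * (1 - b)].
Proof.
move=> b0 b1; have b1' : b <= 1 by exact: ltW.
have P0 : 0 <= b ^+ k by exact: exprn_ge0.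
have P1 : b ^+ k <= 1 by exact: exprn_ile1.
have P2 : (0 < k)%N -> b ^+ k < 1 by move=> k0; rewrite exprn_ilt1 // ?lt0n -?lt0n.
have P3 : 1 - b ^+ k <= k%:R * (1 - b).
  by have := pow_diff k b0 b1' (lexx 1); rewrite expr1n.
split => // k1.
case: k k1 P0 P1 P2 P3 => [//|k] k1 P0 P1 P2 P3.
have Q2 : b ^+ k < 1 by rewrite exprn_ilt1 // -lt0n -ltnS.
have Q3 : 1 - b ^+ k <= k%:R * (1 - b).
  by have := pow_diff k b0 b1' (lexx 1); rewrite expr1n.
rewrite exprS -addn1 natrD mulrDl mul1r.
have : 0 < (1 - b) * (1 - b ^+ k) by rewrite mulr_gt0 // subr_gt0.
nra.
Qed.

Lemma prod_strict n (k : nat -> nat) (b : nat -> R) :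
  (forall j, 0 <= b j < 1) ->
  let P := \prod_(j < n) b j ^+ k j in
  let S := \sum_(j < n) (k j)%:R * (1 - b j) in
  let K := (\sum_(j < n) k j)%N in
  [/\ 0 <= P, P <= 1, 1 - P <= S, (0 < K)%N -> P < 1 & (1 < K)%N -> 1 - P < S].
Proof.
move=> hb; elim: n => [|n IH] /=.
  by rewrite !big_ord0 subrr lexx ler01.
rewrite !big_ord_recr /=.
move: IH => /= [P0 P1 PS PK1 PK2].
set P := \prod_(j < n) b j ^+ k j; set S := \sum_(j < n) (k j)%:R * (1 - b j).
set K := (\sum_(j < n) k j)%N.
have /andP[b0 b1] := hb n.
have [c0 c1 cK1 cS cK2] := pow_strict (k n) b0 b1.
set c := b n ^+ k n in c0 c1 cK1 cS cK2 *.
have e : 1 - P * c = (1 - P) + P * (1 - c) by ring.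
have h1 : P * (1 - c) <= 1 - c by rewrite ler_piMl // subr_ge0.
split.
- exact: mulr_ge0.
- by rewrite mulr_ile1.
- rewrite e; apply: lerD => //; exact: le_trans h1 cS.
- rewrite addn_gt0 => /orP[/PK1 PK|/cK1 ck].
    by rewrite (le_lt_trans (ler_piMr _ c1)) // (le_trans _ P1).
  by rewrite (le_lt_trans (ler_piMl _ P1)) // (le_trans _ c1).
- move=> K2; rewrite e.
  have [Kn1|] := ltnP 1 K.
    by apply: ltr_leD; [exact: PK2|exact: le_trans h1 cS].
  rewrite leq_eqVlt ltnS leqn0 => /orP[/eqP K1|/eqP K0].
    have kn : (0 < k n)%N by move: K2; rewrite K1 addnC -[X in (X < _)%N]addn1 ltn_add2r.
    have h2 : P * (1 - c) < 1 - c.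
      have hK : (0 < K)%N by rewrite K1.
      have := PK1 hK; have := cK1 kn => ck pk.
      have : 0 < (1 - P) * (1 - c) by rewrite mulr_gt0 // subr_gt0.
      nra.
    apply: ler_ltD; first exact: PS.
    exact: lt_le_trans h2 cS.
  have kn : (1 < k n)%N by move: K2; rewrite K0 add0n.
  apply: ler_ltD; first exact: PS.
  apply: le_lt_trans h1 _; exact: cK2.
Qed.

End Ineq.
Section Aux2.
Variable R : realType.
Local Open Scope ereal_scope.

Lemma near_sum (w : nat -> nat -> R) :
  (forall j (eps : R), (0 < eps)%R -> \forall n \near \oo, (w n j <= eps)%R) ->
  forall N (eps : R), (0 < eps)%R -> \forall n \near \oo, (\sum_(j < N) w n j <= eps)%R.
Proof.
move=> hw; elim=> [|N IH] eps e0.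
  by apply: nearW => n; rewrite big_ord0 ltW.
near=> n; rewrite big_ord_recr /= [leRHS](splitr eps) lerD //; near: n.
  by apply: IH; rewrite divr_gt0.
by apply: hw; rewrite divr_gt0.
Unshelve. all: by end_near.
Qed.

Lemma esum_le1 (v : nat -> R) k : (forall j, 0 <= v j)%R ->
  \esum_(j in [set: nat]) (v j)%:E = 1 -> (v k <= 1)%R.
Proof.
move=> v0 v1; rewrite -lee_fin -v1; apply: esum_ge; exists [set k].
  by split => //; exact: finite_set1.
by rewrite fsbig_set1.
Qed.

Lemma DC (v : nat -> R) (w : nat -> nat -> R) :
  (forall j, 0 <= v j)%R -> \esum_(j in [set: nat]) (v j)%:E = 1 ->
  (forall n j, 0 <= w n j <= 1)%R ->
  (forall j (eps : R), (0 < eps)%R -> \forall n \near \oo, (w n j <= eps)%R) ->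
  forall eps : R, (0 < eps)%R ->
  \forall n \near \oo, \esum_(j in [set: nat]) (v j * w n j)%:E <= eps%:E.
Proof.
move=> v0 v1 w01 hw eps e0.
have e20 : (0 < eps / 2)%R by rewrite divr_gt0.
have fin : \sum_(0 <= k <oo) (v k)%:E < +oo.
  by rewrite nneseries_esumT ?v1 ?ltry // => k; rewrite lee_fin.
have tail := nneseries_tail_cvg fin (fun k _ => (v0 k : 0 <= (v k)%:E)).
have /fine_cvgP[tfin tcvg] := tail.
have tsmall := cvgr0_norm_lt _ tcvg _ e20.
have [N1 _ H1] := tfin.
have [N2 _ H2] := tsmall.
set N := maxn N1 N2.
have hN : \sum_(N <= k <oo) (v k)%:E <= (eps / 2)%:E.
  have fN := H1 N (leq_maxl _ _); have sN := H2 N (leq_maxr _ _).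
  rewrite /= in fN sN.
  rewrite -(fineK fN) lee_fin; exact: le_trans (ler_norm _) (ltW sN).
have vw0 n k : 0 <= (v k * w n k)%:E.
  by rewrite lee_fin mulr_ge0 //; case/andP: (w01 n k).
near=> n.
rewrite -nneseries_esumT // (nneseries_split 0 N) // add0n.
have -> : eps%:E = (eps / 2)%:E + (eps / 2)%:E by rewrite -EFinD -splitr.
apply: leeD.
  rewrite sumEFin lee_fin big_mkord.
  apply: le_trans (_ : \sum_(j < N) w n j <= _)%R.
    apply: ler_sum => j _; case/andP: (w01 n j) => w0 _.
    by rewrite ler_piMl // (esum_le1 _ v0 v1).
  by near: n; apply: near_sum.
apply: le_trans hN; apply: lee_nneseries => k _.
  by move=> _; exact: vw0.
rewrite lee_fin ler_piMr //; by case/andP: (w01 n k).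
Unshelve. all: by end_near.
Qed.
End Aux2.
Section GWP2.
Variable R : realType.
Variable p : nat -> seq nat -> R.
Hypothesis Hp : is_offspring_law p.
Local Open Scope ereal_scope.

Let p0 i z : (0 <= p i z)%R. Proof. by case: Hp. Qed.

Lemma Ex_sum_esum i (h : seq nat -> nat -> R) :
  (forall z j, 0 <= h z j)%R -> (forall z j, (size z <= j)%N -> h z j = 0%R) ->
  Ex p i (fun z => \sum_(j < size z) h z j)%R =
  \esum_(j in [set: nat]) Ex p i (fun z => h z j).
Proof.
move=> h0 hz; rewrite /Ex.
transitivity (\esum_(z in [set: seq nat]) \esum_(j in [set: nat]) (p i z * h z j)%:E).
  apply: eq_esum => z _; rewrite (@esum_nat_fin _ _ (size z)).
  - by rewrite sumEFin mulr_sumr.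
  - by move=> j; rewrite lee_fin mulr_ge0.
  - by move=> j /hz ->; rewrite mulr0.
by apply: esum_swap => z j; rewrite lee_fin mulr_ge0.
Qed.

Lemma Ex_M i (c : nat -> R) : (forall j, 0 <= c j)%R ->
  Ex p i (fun z => \sum_(j < size z) (nth 0%N z j)%:R * c j)%R =
  \esum_(j in [set: nat]) Mbar p i j * (c j)%:E.
Proof.
move=> c0; rewrite (@Ex_sum_esum i (fun z j => (nth 0%N z j)%:R * c j)%R); last 2 first.
- by move=> z j; rewrite mulr_ge0.
- by move=> z j zj; rewrite nth_default // mul0r.
apply: eq_esum => j _.
rewrite (_ : (fun z => _) = (fun z => c j * (nth 0%N z j)%:R)%R); last first.
  by apply: funext => z; rewrite mulrC.
by rewrite ExZ // muleC.
Qed.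

Lemma Mbar_ge0 i j : 0 <= Mbar p i j.
Proof. exact: Ex_ge0. Qed.

Lemma F1_diff a b i : unit_cube a -> unit_cube b -> (forall j, b j <= a j)%R ->
  (F1 p a i - F1 p b i)%:E <= \esum_(j in [set: nat]) Mbar p i j * (a j - b j)%:E.
Proof.
move=> ac bc ba.
have hab j : (0 <= b j /\ b j <= a j /\ a j <= 1)%R.
  by case/andP: (bc j) => b0 _; case/andP: (ac j) => _ a1; split.
rewrite !F1E (@Ex_sub _ _ Hp i _ _ 1%R); last 2 first.
- by move=> z; case/andP: (pr_01 z bc).
- by move=> z; rewrite pr_mono //=; case/andP: (pr_01 z ac).
have db z : (0 <= pr a z - pr b z <= 1)%R.
  rewrite subr_ge0 pr_mono //=; case/andP: (pr_01 z ac) => _ a1.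
  by case/andP: (pr_01 z bc) => b0 _; rewrite lerBlDr (le_trans a1) // lerDl.
rewrite -(Ex_fin Hp _ db) -Ex_M; last by move=> j; case: (hab j) => ? [? ?]; rewrite subr_ge0.
by apply: Ex_le => // z; apply: pr_diff.
Qed.

End GWP2.
Section GWP2b.
Variable R : realType.
Variable p : nat -> seq nat -> R.
Hypothesis Hp : is_offspring_law p.
Local Open Scope ereal_scope.

Let p0 i z : (0 <= p i z)%R. Proof. by case: Hp. Qed.

Lemma Ex_eq_supp i g h : (forall z, (0 < p i z)%R -> g z = h z) -> Ex p i g = Ex p i h.
Proof.
move=> gh; apply: eq_esum => z _; have := p0 i z; rewrite le_eqVlt => /orP[/eqP <-|/gh ->] //.
by rewrite !mul0r.
Qed.

Lemma Ex_le_supp i g h : (forall z, (0 < p i z)%R -> (g z <= h z)%R) -> Ex p i g <= Ex p i h.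
Proof.
move=> gh; apply: le_esum => z _; have := p0 i z; rewrite le_eqVlt => /orP[/eqP <-|pz].
  by rewrite !mul0r.
by rewrite lee_fin ler_wpM2l // gh.
Qed.

Lemma Ex_ge_term i g z : (forall z, 0 <= g z)%R -> (p i z * g z)%:E <= Ex p i g.
Proof.
move=> g0; apply: esum_ge; exists [set z]; first by split => //; exact: finite_set1.
by rewrite fsbig_set1.
Qed.

Lemma Ex_eq0 i g : (forall z, 0 <= g z)%R -> Ex p i g = 0 ->
  forall z, (0 < p i z)%R -> g z = 0%R.
Proof.
move=> g0 E0 z pz; have := Ex_ge_term i z g0; rewrite E0 lee_fin => h.
apply/eqP; rewrite eq_le g0 andbT; move: h; rewrite pmulr_rle0 //.
Qed.

Lemma adde_cancel (a d : \bar R) : a \is a fin_num -> 0 <= d -> a + d = a -> d = 0.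
Proof.
move=> af d0; rewrite -(fineK af); case: d d0 => [d||] // d0.
  by move=> /eqP; rewrite -EFinD eqe => /eqP h; congr EFin; move: h; lra.
Qed.

Lemma one_minus_F1 (s : nat -> R) i : unit_cube s -> (1 - F1 p s i)%:E = Ex p i (fun z => 1 - pr s z)%R.
Proof.
move=> sc; have b z : (pr s z <= (1:R) <= 1)%R by rewrite lexx andbT; case/andP: (pr_01 z sc).
have := @Ex_sub _ _ Hp i (pr s) (fun _ => 1%R) 1%R (fun z => proj1 (andP (pr_01 z sc))) b.
rewrite Ex_cst // -F1E => ->.
have db z : (0 <= 1 - pr s z <= 1)%R.
  by case/andP: (pr_01 z sc) => a c; rewrite subr_ge0 c /= lerBlDr lerDl.
by rewrite -(Ex_fin Hp i db).
Qed.

Lemma pr_le_factor (s : nat -> R) z j : unit_cube s -> (0 < nth 0%N z j)%N -> (pr s z <= s j)%R.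
Proof.
move=> sc nz; have jz : (j < size z)%N.
  by rewrite ltnNge; apply/negP => /(nth_default 0%N) h; rewrite h in nz.
rewrite /pr (bigD1 (Ordinal jz)) //=.
have [s0 s1] := andP (sc j).
have r1 : (\prod_(i < size z | i != Ordinal jz) s i ^+ nth 0%N z i <= 1)%R.
  by apply: prodr_ile1 => k _; case/andP: (sc k) => a b; rewrite exprn_ge0 // exprn_ile1.
apply: le_trans (ler_piMr (exprn_ge0 _ s0) r1) _.
case: (nth 0%N z j) nz => [//|k] _; rewrite exprS.
by apply: ler_piMr => //; rewrite exprn_ile1.
Qed.

Lemma sumn_nth z : sumn z = (\sum_(j < size z) nth 0%N z j)%N.
Proof. by rewrite sumnE (big_nth 0%N) big_mkord. Qed.

Lemma sumn0_nth z : sumn z = 0%N -> forall j, nth 0%N z j = 0%N.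
Proof.
elim: z => [|a z IH] //= h j; first by rewrite nth_nil.
move: h => /eqP; rewrite addn_eq0 => /andP[/eqP -> /eqP h].
by case: j => //= j; exact: IH.
Qed.

Lemma pr_lin z (s : nat -> R) : sumn z = 1%N -> pr s z = (\sum_(j < size z) (nth 0%N z j)%:R * s j)%R.
Proof.
elim: z s => [|a z IH] s //= h.
rewrite /pr /= big_ord_recl [in RHS]big_ord_recl.
under eq_bigr => k _ do rewrite lift0 /=.
under [in RHS]eq_bigr => k _ do rewrite lift0 /=.
rewrite /=.
case: a h => [|a] /= h.
  rewrite add0n in h; rewrite expr0 mul1r mul0r add0r.
  exact: (IH (fun j => s j.+1) h).
move: h; rewrite addSn => /eqP; rewrite eqSS addn_eq0 => /andP[/eqP a0 /eqP z0].
subst a; have hz := sumn0_nth z0.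
rewrite big1; last by move=> j _; rewrite hz expr0.
rewrite big1; last by move=> j _; rewrite hz mul0r.
by rewrite expr1 mulr1 addr0 mul1r.
Qed.

Lemma Mi_esum i : Mi p i = \esum_(j in [set: nat]) Mbar p i j * 1%:E.
Proof.
rewrite -Ex_M //; rewrite /Mi; congr Ex; apply: funext => z.
by rewrite sumn_nth natr_sum; apply: eq_bigr => j _; rewrite mulr1.
Qed.

End GWP2b.
Section GWP3.
Variable R : realType.
Variable p : nat -> seq nat -> R.
Hypothesis Hp : is_offspring_law p.
Variables (v u : nat -> R) (C U : R).
Hypothesis v0 : forall j, (0 < v j)%R.
Hypothesis u0 : forall i, (0 < u i)%R.
Hypothesis uU : forall i, (u i <= U)%R.
Hypothesis C0 : (0 < C)%R.
Hypothesis MC : forall i j, (Mbar p i j < (C * u i * v j)%:E)%E.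
Hypothesis v1 : (\esum_(j in [set: nat]) (v j)%:E)%E = 1%E.
Local Open Scope ereal_scope.

Let p0 i z : (0 <= p i z)%R. Proof. by case: Hp. Qed.
Let v0' j : (0 <= v j)%R. Proof. exact: ltW. Qed.
Let U0 : (0 <= U)%R. Proof. exact: le_trans (ltW (u0 0)) (uU 0). Qed.
Let CU0 : (0 <= C * U)%R. Proof. by rewrite mulr_ge0 // ltW. Qed.

Lemma Mpow_ge0 n i j : 0 <= Mpow p n i j.
Proof.
elim: n i j => [|n IH] i j /=; first by case: eqP.
by apply: esum_ge0 => k _; rewrite mule_ge0 // Mbar_ge0.
Qed.

Lemma M_w_bound i (w : nat -> R) : (forall j, 0 <= w j)%R ->
  \esum_(j in [set: nat]) Mbar p i j * (w j)%:E <=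
  (C * U)%:E * \esum_(j in [set: nat]) (v j * w j)%:E.
Proof.
move=> w0; apply: (@le_trans _ _ ((C * u i)%:E * \esum_(j in [set: nat]) (v j * w j)%:E)).
  rewrite -esumZl; last 2 first.
  - by rewrite mulr_ge0 // ltW.
  - by move=> j _; rewrite lee_fin mulr_ge0.
  apply: le_esum => j _; rewrite -EFinM mulrA EFinM.
  by apply: lee_wpmul2r; [rewrite lee_fin|exact: ltW].
apply: lee_wpmul2r; first by apply: esum_ge0 => j _; rewrite lee_fin mulr_ge0.
by rewrite lee_fin ler_wpM2l // ltW.
Qed.

Definition F0 n := Fn p n (zero R).

Lemma F0_cube n : unit_cube (F0 n). Proof. exact: Fn_cube (zero_cube R). Qed.

Lemma F0_mono m n j : (m <= n)%N -> (F0 m j <= F0 n j)%R.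
Proof.
move=> /subnK <-; elim: (n - m)%N => [|k IH]; first by rewrite add0n.
apply: le_trans IH _; rewrite addSn; exact: Fn0_incr.
Qed.

Definition q j := sup [set F0 n j | n in [set: nat]].

Lemma q_has_sup j : has_sup [set F0 n j | n in [set: nat]].
Proof.
split; first by exists (F0 0 j), 0%N.
exists 1%R => _ [n _ <-]; by case/andP: (F0_cube n j).
Qed.

Lemma F0_le_q n j : (F0 n j <= q j)%R.
Proof. by apply: sup_upper_bound; [exact: q_has_sup|exists n]. Qed.

Lemma q_cube : unit_cube q.
Proof.
move=> j; apply/andP; split.
  by apply: le_trans (F0_le_q 0 j); case/andP: (F0_cube 0 j).
by apply: ge_sup; [exists (F0 0 j), 0%N|move=> _ [n _ <-]; case/andP: (F0_cube n j)].
Qed.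

Lemma q_near j (eps : R) : (0 < eps)%R -> \forall n \near \oo, (q j - F0 n j <= eps)%R.
Proof.
move=> e0; have [_ [n0 _ <-] hn0] := sup_adherent e0 (q_has_sup j).
exists n0 => // n /= n0n; rewrite lerBlDr addrC -lerBlDr.
by apply: le_trans (ltW hn0) _; apply: F0_mono.
Qed.

Lemma DCq : forall eps : R, (0 < eps)%R ->
  \forall n \near \oo, \esum_(j in [set: nat]) (v j * (q j - F0 n j))%:E <= eps%:E.
Proof.
apply: DC => //.
  move=> n j; rewrite subr_ge0 F0_le_q /=.
  case/andP: (F0_cube n j) => f0 _; case/andP: (q_cube j) => _ q1.
  by rewrite lerBlDr (le_trans q1) // lerDl.
by move=> j eps e0; apply: q_near.
Qed.

Lemma q_fix i : F1 p q i = q i.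
Proof.
apply/eqP; rewrite eq_le; apply/andP; split; last first.
  apply: ge_sup; first by exists (F0 0 i), 0%N.
  move=> _ [[|n] _ <-].
    by rewrite /F0 /= /zero; case/andP: (F1_cube Hp q_cube i).
  rewrite /F0 FnS; apply: F1_mono => //; [exact: Fn_cube (zero_cube R)|exact: q_cube|].
  exact: F0_le_q.
apply/ler_addgt0Pr => e e0.
have eCU : (0 < e / (C * U + 1))%R by rewrite divr_gt0 // ltr_wpDl.
have [n0 _ Hn0] := DCq eCU.
have h := Hn0 n0 (leqnn n0); rewrite /= in h.
have h1 := F1_diff Hp i q_cube (F0_cube n0) (fun j => F0_le_q n0 j).
have w0 j : (0 <= q j - F0 n0 j)%R by rewrite subr_ge0 F0_le_q.
have h2 := @M_w_bound i (fun j => q j - F0 n0 j)%R w0.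
have h3 := le_trans h1 (le_trans h2 (lee_wpmul2l (lee_tofin CU0) h)).
rewrite -EFinM lee_fin in h3.
have h4 : (C * U * (e / (C * U + 1)) <= e)%R.
  have hd : (0 < C * U + 1)%R by rewrite ltr_wpDl.
  rewrite mulrCA; apply: ler_piMr; first exact: ltW.
  by rewrite ler_pdivrMr // mul1r lerDl.
have h5 : (F1 p (F0 n0) i <= q i)%R by exact: (F0_le_q n0.+1 i).
move: (le_trans h3 h4) h5; lra.
Qed.
Hypothesis veig : forall j, (\esum_(i in [set: nat]) ((v i)%:E * Mbar p i j))%E = (v j)%:E.
Hypothesis Hirr : forall i j, exists n, (0 < Mpow p n.+1 i j)%E.
Hypothesis Hlin : F_not_linear p.

Lemma vM_c (c : nat -> R) : (forall j, 0 <= c j)%R ->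
  \esum_(i in [set: nat]) (v i)%:E * (\esum_(j in [set: nat]) Mbar p i j * (c j)%:E) =
  \esum_(j in [set: nat]) (v j * c j)%:E.
Proof.
move=> c0.
transitivity (\esum_(i in [set: nat]) \esum_(j in [set: nat])
                 ((v i)%:E * Mbar p i j * (c j)%:E)).
  apply: eq_esum => i _; rewrite -esumZl //; last first.
    by move=> j _; rewrite mule_ge0 // ?Mbar_ge0 // lee_fin.
  by apply: eq_esum => j _; rewrite muleA.
rewrite esum_swap; last by move=> i j; rewrite !mule_ge0 // ?Mbar_ge0 // lee_fin.
apply: eq_esum => j _.
rewrite (eq_esum (b := fun i => (c j)%:E * ((v i)%:E * Mbar p i j))); last first.
  by move=> i _; rewrite muleC.
rewrite esumZl //; last by move=> i _; rewrite mule_ge0 // ?Mbar_ge0 // lee_fin.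
by rewrite veig -EFinM mulrC.
Qed.

Lemma esum_cancel (x y : nat -> R) : (forall i, 0 <= x i <= y i)%R ->
  \esum_(i in [set: nat]) (v i * y i)%:E = \esum_(i in [set: nat]) (v i * x i)%:E ->
  \esum_(i in [set: nat]) (v i * x i)%:E \is a fin_num ->
  forall i, x i = y i.
Proof.
move=> xy E fin i.
have d0 k : (0 <= v k * (y k - x k))%R.
  by case/andP: (xy k) => _ h; rewrite mulr_ge0 // subr_ge0.
have : \esum_(k in [set: nat]) (v k * x k)%:E +
       \esum_(k in [set: nat]) (v k * (y k - x k))%:E =
       \esum_(k in [set: nat]) (v k * x k)%:E.
  rewrite -esumD; last 2 first.
  - by move=> k _; case/andP: (xy k) => h _; rewrite lee_fin mulr_ge0.
  - by move=> k _; rewrite lee_fin.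
  by rewrite -E; apply: eq_esum => k _; rewrite -EFinD -mulrDr addrC subrK.
move=> /(adde_cancel fin (esum_ge0 _)) => /(_ (fun k _ => d0 k)) D0.
have : (v i * (y i - x i))%:E <= 0.
  rewrite -D0; apply: esum_ge; exists [set i]; first by split => //; exact: finite_set1.
  by rewrite fsbig_set1.
rewrite lee_fin pmulr_rle0 // subr_le0 => h.
by apply/eqP; rewrite eq_le h andbT; case/andP: (xy i).
Qed.

Lemma q_prop1 k j : 0 < Mbar p k j -> (q j < 1)%R -> (q k < 1)%R.
Proof.
move=> Mkj qj.
have [z [pz nz]] : exists z, (0 < p k z)%R /\ (0 < nth 0%N z j)%N.
  apply: contrapT => hn; move: Mkj; rewrite /Mbar /Ex esum1 ?ltxx // => z _.
  suff -> : (p k z * (nth 0%N z j)%:R = 0)%R by [].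
  have := p0 k z; rewrite le_eqVlt => /orP[/eqP <-|pz]; first by rewrite mul0r.
  case hz: (nth 0%N z j) => [|m]; first by rewrite mulr0.
  by exfalso; apply: hn; exists z; rewrite hz.
have h1 := one_minus_F1 Hp k q_cube; rewrite q_fix in h1.
have g0 z' : (0 <= 1 - pr q z')%R by case/andP: (pr_01 z' q_cube) => _ ?; rewrite subr_ge0.
have h2 := Ex_ge_term p k z g0; rewrite -h1 lee_fin in h2.
have h3 : (0 < p k z * (1 - pr q z))%R.
  by rewrite mulr_gt0 // subr_gt0; apply: le_lt_trans (pr_le_factor q_cube nz) qj.
by move: (lt_le_trans h3 h2); rewrite subr_gt0.
Qed.

Lemma q_propn n i j : 0 < Mpow p n i j -> (q j < 1)%R -> (q i < 1)%R.
Proof.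
elim: n j => [|n IH] j /=.
  by case: eqP => [->//|_]; rewrite ltxx.
move=> hM qj.
have [k hk] : exists k, 0 < Mpow p n i k * Mbar p k j.
  apply: contrapT => hn; move: hM; rewrite esum1 ?ltxx // => k _.
  apply/eqP; rewrite eq_le mule_ge0 ?Mpow_ge0 ?Mbar_ge0 // andbT.
  by rewrite leNgt; apply/negP => h; apply: hn; exists k.
move: hk; rewrite mule_ge0_gt0 ?Mpow_ge0 ?Mbar_ge0 // => /andP[h1 h2].
exact: (IH k h1 (q_prop1 h2 qj)).
Qed.

Lemma pr_one z : pr (fun _ => 1%R) z = 1%R :> R.
Proof. by rewrite /pr big1 // => j _; rewrite expr1n. Qed.

Lemma q_one j : q j = 1%R.
Proof.
have [_ q1] := andP (q_cube j).
move: q1; rewrite le_eqVlt => /orP[/eqP //|qj].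
exfalso; apply: Hlin.
have allq i : (q i < 1)%R by have [n hn] := Hirr i j; exact: q_propn hn qj.
have c0 k : (0 <= 1 - q k)%R by case/andP: (q_cube k) => _ ?; rewrite subr_ge0.
have one_cube : unit_cube (fun _ : nat => 1%R : R) by move=> k; rewrite ler01 lexx.
have hq k : (0 <= q k /\ q k <= 1 /\ (1 : R) <= 1)%R.
  by case/andP: (q_cube k) => a b; split.
set S := fun z => (\sum_(j < size z) (nth 0%N z j)%:R * (1 - q j))%R.
set b := fun i => \esum_(j in [set: nat]) Mbar p i j * (1 - q j)%:E.
have bE i : b i = Ex p i S by rewrite /b -(Ex_M Hp).
have aE i : (1 - q i)%:E = Ex p i (fun z => 1 - pr q z)%R.
  by rewrite -{1}(q_fix i) (one_minus_F1 Hp i q_cube).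
have dS z : (0 <= S z - (1 - pr q z))%R.
  by rewrite subr_ge0 -(pr_one z); exact: (pr_diff z hq).
have a0 z : (0 <= 1 - pr q z)%R.
  by case/andP: (pr_01 z q_cube) => _ ?; rewrite subr_ge0.
have ab i : (1 - q i)%:E <= b i.
  by rewrite aE bE; apply: Ex_le => // z; rewrite -subr_ge0.
have vq_fin : \esum_(k in [set: nat]) (v k * (1 - q k))%:E \is a fin_num.
  rewrite ge0_fin_numE; last by apply: esum_ge0 => k _; rewrite lee_fin mulr_ge0.
  apply: le_lt_trans (ltry 1%R); rewrite -v1; apply: le_esum => k _.
  rewrite lee_fin ler_piMr // lerBlDr lerDl; by case/andP: (q_cube k).
have bfin i : b i \is a fin_num.
  rewrite ge0_fin_numE; last by apply: le_trans (ab i); rewrite lee_fin.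
  apply: le_lt_trans (M_w_bound i c0) _.
  have y0 : 0 <= \esum_(k in [set: nat]) (v k * (1 - q k))%:E.
    by apply: esum_ge0 => k _; rewrite lee_fin mulr_ge0.
  apply: lte_mul_pinfty; [by rewrite lee_fin|by []|by rewrite -ge0_fin_numE].
have Bc : forall i, (1 - q i)%R = fine (b i).
  apply: esum_cancel => //.
  - move=> i; rewrite c0 /= -lee_fin fineK //; exact: ab.
  - rewrite -(vM_c c0); apply: eq_esum => i _; rewrite EFinM fineK //.
have diff0 i z : (0 < p i z)%R -> S z = (1 - pr q z)%R.
  move=> pz; apply/eqP; rewrite -subr_eq0; apply/eqP; move: z pz.
  apply: (@Ex_eq0 _ _ i (fun z => S z - (1 - pr q z))%R dS).
  have h := bE i; rewrite -(fineK (bfin i)) -Bc aE in h.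
  apply: (@adde_cancel _ (Ex p i (fun z => 1 - pr q z)%R)).
  - by rewrite -aE.
  - exact: Ex_ge0.
  rewrite -ExD // h; congr Ex; apply: funext => z; by rewrite addrC subrK.
have supp1 i z : (0 < p i z)%R -> (sumn z <= 1)%N.
  move=> pz; rewrite leqNgt; apply/negP => hK.
  have qb k : (0 <= q k < 1)%R by rewrite allq andbT; case/andP: (q_cube k).
  have [_ _ _ _ st] := prod_strict (size z) (nth 0%N z) qb.
  have := st _; rewrite -sumn_nth => /(_ hK).
  by rewrite -/(pr q z) -/(S z) (diff0 i z pz) ltxx.
have Mi0 i : 0 <= Mi p i by apply: Ex_ge0.
have Mi1 i : Mi p i <= 1.
  rewrite -(Ex_cst Hp i ler01); apply: Ex_le_supp => // z pz.
  by rewrite lern1; exact: supp1 pz.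
have mfin k : Mi p k \is a fin_num by rewrite ge0_fin_numE // (le_lt_trans (Mi1 k)) ?ltry.
have vm_eq : \esum_(k in [set: nat]) (v k * fine (Mi p k))%:E =
             \esum_(k in [set: nat]) (v k * 1)%:E.
  rewrite -(vM_c (fun _ => ler01)); apply: eq_esum => k _.
  by rewrite EFinM fineK // -(Mi_esum Hp).
have v1' : \esum_(k in [set: nat]) (v k * 1)%:E = 1.
  by rewrite (eq_esum (b := fun k => (v k)%:E)) ?v1 // => k _; rewrite mulr1.
have MiE i : Mi p i = 1.
  rewrite -(fineK (mfin i)); congr EFin.
  apply: (@esum_cancel (fun k => fine (Mi p k)) (fun _ => 1%R)).
  - by move=> k; rewrite -!lee_fin fineK // Mi0 Mi1.
  - by rewrite vm_eq.
  - by rewrite vm_eq v1'.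
have supp i z : (0 < p i z)%R -> sumn z = 1%N.
  have E1 : Mi p i + Ex p i (fun z => (sumn z == 0%N)%:R)%R = 1.
    rewrite /Mi -(ExD Hp); [|by move=> ?; rewrite ler0n|by move=> ?; rewrite ler0n].
    rewrite -(Ex_cst Hp i ler01); apply: (Ex_eq_supp Hp) => z' pz'.
    have := supp1 i z' pz'; case: (sumn z') => [|[|//]] _ /=.
      by rewrite add0r.
    by rewrite addr0.
  rewrite MiE in E1.
  have f1 : (1 : \bar R) \is a fin_num by [].
  have g0 z' : (0 <= (sumn z' == 0%N)%:R :> R)%R by rewrite ler0n.
  have E0 := adde_cancel f1 (Ex_ge0 Hp i g0) E1.
  move=> pz; have := @Ex_eq0 _ _ i _ g0 E0 z pz.
  have := supp1 i z pz; case: (sumn z) => [|[|//]] //= _.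
  by move/eqP; rewrite oner_eq0.
move=> i s sc.
rewrite F1E (@Ex_eq_supp _ _ Hp i (pr s) (fun z => \sum_(j < size z) (nth 0%N z j)%:R * s j)%R).
  by rewrite (Ex_M Hp) // => k; case/andP: (sc k).
by move=> z pz; apply: pr_lin; exact: supp pz.
Qed.

Lemma Qsmall (eps : R) : (0 < eps)%R ->
  exists N, forall n, (N <= n)%N -> forall i, (Qn p n.+1 (zero R) i <= eps)%R.
Proof.
move=> e0.
have eCU : (0 < eps / (C * U + 1))%R by rewrite divr_gt0 // ltr_wpDl.
have [N _ HN] := DCq eCU.
exists N => n Nn i.
have h := HN n Nn; rewrite /= in h.
have h1 := F1_diff Hp i q_cube (F0_cube n) (fun j => F0_le_q n j).
have w0 j : (0 <= q j - F0 n j)%R by rewrite subr_ge0 F0_le_q.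
have h2 := @M_w_bound i (fun j => q j - F0 n j)%R w0.
have h3 := le_trans h1 (le_trans h2 (lee_wpmul2l (lee_tofin CU0) h)).
rewrite -EFinM lee_fin q_fix q_one in h3.
have h4 : (C * U * (eps / (C * U + 1)) <= eps)%R.
  have hd : (0 < C * U + 1)%R by rewrite ltr_wpDl.
  rewrite mulrCA; apply: ler_piMr; first exact: ltW.
  by rewrite ler_pdivrMr // mul1r lerDl.
exact: le_trans h3 h4.
Qed.
End GWP3.
Section GWP4.
Variable R : realType.
Variable p : nat -> seq nat -> R.
Hypothesis Hp : is_offspring_law p.

Let p0 i z : (0 <= p i z)%R. Proof. by case: Hp. Qed.

Lemma prod_cond_bound (x : nat -> R) (z : seq nat) j (Qs : R) : unit_cube x ->
  (forall l, 1 - x l <= Qs)%R ->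
  (1 - \prod_(l < size z | (j < l)%N) x l ^+ nth 0%N z l <= Qs * (sumn z)%:R)%R.
Proof.
move=> xc xQ.
have Qs0 : (0 <= Qs)%R by apply: le_trans (xQ 0%N); case/andP: (xc 0%N) => _ ?; rewrite subr_ge0.
rewrite big_mkcond /=.
have hy l : (0 <= (if (j < l)%N then x l ^+ nth 0%N z l else 1) /\
             (if (j < l)%N then x l ^+ nth 0%N z l else 1) <= (1:R) /\ (1:R) <= 1)%R.
  case/andP: (xc l) => a b; case: ifP => _; split; rewrite ?ler01 ?exprn_ge0 ?exprn_ile1 //.
have := prod_diff (size z) (x := fun _ => 1%R) (y := fun l : nat =>
   if (j < l)%N then x l ^+ nth 0%N z l else 1%R) hy.
rewrite big1 // => h; apply: le_trans h _.
rewrite sumn_nth natr_sum mulr_sumr; apply: ler_sum => l _.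
case/andP: (xc l) => a b.
case: ifP => _.
  have := pow_diff (nth 0%N z l) a b (lexx 1); rewrite expr1n => h.
  by apply: le_trans h _; rewrite mulrC ler_wpM2r // ?ler0n // xQ.
by rewrite subrr mulr_ge0 // ler0n.
Qed.

Lemma h_bound (x : nat -> R) (z : seq nat) j (Qs : R) : unit_cube x ->
  (forall l, 1 - x l <= Qs)%R ->
  (0 <= (\sum_(k < nth 0%N z j) x j ^+ k) *
        (1 - \prod_(l < size z | (j < l)%N) x l ^+ nth 0%N z l) <=
   (nth 0%N z j)%:R * Num.min 1 (Qs * (sumn z)%:R))%R.
Proof.
move=> xc xQ; case/andP: (xc j) => xj0 xj1.
have s0 : (0 <= \sum_(k < nth 0%N z j) x j ^+ k)%R by apply: sumr_ge0 => k _; rewrite exprn_ge0.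
have s1 : (\sum_(k < nth 0%N z j) x j ^+ k <= (nth 0%N z j)%:R)%R.
  apply: le_trans (_ : \sum_(k < nth 0%N z j) (1:R) <= _)%R.
    by apply: ler_sum => k _; rewrite exprn_ile1.
  by rewrite sumr_const card_ord.
have P0 : (0 <= \prod_(l < size z | (j < l)%N) x l ^+ nth 0%N z l)%R.
  by apply: prodr_ge0 => l _; case/andP: (xc l) => ? ?; rewrite exprn_ge0.
have P1 : (\prod_(l < size z | (j < l)%N) x l ^+ nth 0%N z l <= 1)%R.
  by apply: prodr_ile1 => l _; case/andP: (xc l) => ? ?; rewrite exprn_ge0 ?exprn_ile1.
have d0 : (0 <= 1 - \prod_(l < size z | (j < l)%N) x l ^+ nth 0%N z l)%R by rewrite subr_ge0.
rewrite mulr_ge0 //=; apply: ler_pM => //.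
rewrite le_min; apply/andP; split; first by rewrite lerBlDr lerDl.
exact: prod_cond_bound.
Qed.


Lemma Qsup_props n (s : nat -> R) : unit_cube s ->
  [/\ forall j, 0 <= Qn p n s j, forall j, Qn p n s j <= Qsup p n s & 0 <= Qsup p n s].
Proof.
move=> sc; have xc := Fn_cube Hp n sc.
have Q0 j : 0 <= Qn p n s j by rewrite /Qn subr_ge0; case/andP: (xc j).
have hs : has_sup [set Qn p n s i | i in [set: nat]].
  split; first by exists (Qn p n s 0%N), 0%N.
  by exists 1 => _ [k _ <-]; rewrite /Qn lerBlDr lerDl; case/andP: (xc k).
have QQ j : Qn p n s j <= Qsup p n s by apply: (sup_upper_bound hs); exists j.
by split => //; apply: le_trans (Q0 0%N) (QQ 0%N).
Qed.

Lemma eps1_bound n (s : nat -> R) i (K : nat) (e : R) : unit_cube s -> 0 <= e ->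
  (Ex p i (fun z => ((sumn z)%:R * (K < sumn z)%N%:R)%R) <= e%:E * Mi p i)%E ->
  0 <= eps1 p n s i <= Qsup p n s * (e + K%:R * Qsup p n s).
Proof.
move=> sc e0 hK.
have xc := Fn_cube Hp n sc.
have [Q0 QQ Qs0] := Qsup_props n sc.
set Qs := Qsup p n s in QQ Qs0 *.
set x := Fn p n s in xc *.
set m := fun z : seq nat => Num.min 1 (Qs * (sumn z)%:R).
have m0 z : 0 <= m z by rewrite /m le_min ler01 mulr_ge0.
have xQ l : 1 - x l <= Qs by exact: QQ l.
have Nb j : (Nbar p i j x <= Ex p i (fun z => (nth 0%N z j)%:R * m z)%R)%E.
  by apply: Ex_le => // z; case/andP: (h_bound z j xc xQ).
have S_le : (\esum_(j in [set: nat]) (Qn p n s j)%:E * Nbar p i j x <=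
            Qs%:E * Ex p i (fun z => (sumn z)%:R * m z)%R)%E.
  apply: (@le_trans _ _ (\esum_(j in [set: nat]) Qs%:E * Ex p i (fun z => (nth 0%N z j)%:R * m z)%R)%E).
    apply: le_esum => j _; apply: lee_pmul => //; first by rewrite lee_fin.
      by apply: Ex_ge0 => // z; case/andP: (h_bound z j xc xQ).
    by rewrite lee_fin.
  rewrite esumZl //; last by move=> j _; apply: Ex_ge0 => // z; rewrite mulr_ge0.
  rewrite -(Ex_sum_esum Hp); last 2 first.
  - by move=> z j; rewrite mulr_ge0.
  - by move=> z j zj; rewrite nth_default // mul0r.
  apply: lee_wpmul2l; first by rewrite lee_fin.
  apply: Ex_le => // z; rewrite -mulr_suml -natr_sum -sumn_nth //.
have Ex_le2 : (Ex p i (fun z => (sumn z)%:R * m z)%R <= (e + K%:R * Qs)%:E * Mi p i)%E.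
  apply: (@le_trans _ _ (Ex p i (fun z => (sumn z)%:R * (K < sumn z)%N%:R + K%:R * Qs * (sumn z)%:R)%R))%E.
    apply: Ex_le => // z.
    case: (ltnP K (sumn z)) => hz /=.
      rewrite mulr1 -[X in X <= _]addr0 lerD //; first by rewrite ler_piMr // /m ge_min lexx.
      by rewrite !mulr_ge0 // ler0n.
    rewrite mulr0 add0r [X in _ <= X]mulrC; apply: ler_wpM2l; first by rewrite ler0n.
    rewrite /m ge_min; apply/orP; right; rewrite mulrC ler_wpM2r // ler_nat //.
  rewrite (ExD Hp); last 2 first.
  - by move=> z; rewrite mulr_ge0 // ler0n.
  - by move=> z; rewrite !mulr_ge0 // ler0n.
  rewrite (ExZ Hp); last 2 first.
  - by rewrite mulr_ge0 // ler0n.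
  - by move=> z; rewrite ler0n.
  rewrite EFinD ge0_muleDl ?lee_fin ?mulr_ge0 ?ler0n //; apply: leeD => //.
have S0 : (0 <= \esum_(j in [set: nat]) (Qn p n s j)%:E * Nbar p i j x)%E.
  by apply: esum_ge0 => j _; rewrite mule_ge0 ?lee_fin // Ex_ge0 // => z; case/andP: (h_bound z j xc xQ).
have Mi0 : (0 <= Mi p i)%E by apply: Ex_ge0 => // z; rewrite ler0n.
have B0 : 0 <= Qs * (e + K%:R * Qs) by rewrite mulr_ge0 // addr_ge0 // mulr_ge0 // ler0n.
rewrite /eps1 -/x.
move: S_le Ex_le2 S0 Mi0.
set S := \esum_(j in [set: nat]) _.
case: (Mi p i) => [mr||] // S_le Ex_le2 S0 Mi0; last first.
  by rewrite /= invr0 mulr0 lexx.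
rewrite /= lee_fin in Mi0.
have Sle := le_trans S_le (lee_wpmul2l (lee_tofin Qs0) Ex_le2).
rewrite -!EFinM in Sle.
have Sfin : S \is a fin_num by rewrite ge0_fin_numE // (le_lt_trans Sle) ?ltry.
rewrite -(fineK Sfin) lee_fin in Sle.
rewrite divr_ge0 ?fine_ge0 //=.
have := Mi0; rewrite le_eqVlt => /orP[/eqP <-|mr0]; first by rewrite invr0 mulr0.
by rewrite ler_pdivrMr // (le_trans Sle) // mulrA.
Qed.

End GWP4.

Unset Implicit Arguments. Set Strict Implicit.

Theorem lemma6 (R : realType) (p : nat -> seq nat -> R) (v u : nat -> R) :
  is_offspring_law p ->
  in_M10 p v u ->
  F_not_linear p ->
  (fun n => ereal_sup
      [set ((`|eps1 p n x.1 x.2| / Qsup p n x.1)%:E)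
         | x in [set x : (nat -> R) * nat | Sset x.1]]) @ \oo --> 0%E.
Proof.
move=> Hp [[Hirr [_ [_ [_ [_ [v0 [u0 [veig [_ [_ [v1 [[U uU] [_ Hiii2]]]]]]]]]]]]] [m [c [C [c0 [C0 [MC _]]]]]]] Hlin.
set G := fun n => ereal_sup _.
have Sz : Sset (zero R).
  split; first exact: (zero_cube R).
  move=> h; have := congr1 (fun f => f 0%N) h; rewrite /zero => /eqP; rewrite eq_sym oner_eq0.
  by [].
have key : forall e : R, 0 < e -> exists N, forall n, (N <= n)%N -> (0 <= G n <= e%:E)%E.
  move=> e e0; set e' := e / 2.
  have e'0 : 0 < e' by rewrite divr_gt0.
  have [K _ HK] := Hiii2 e' e'0.
  have HKi := HK K (leqnn K); rewrite /= in HKi.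
  have eK0 : 0 < e' / (K%:R + 1) by rewrite divr_gt0 // ltr_wpDl // ler0n.
  have [N HN] := @Qsmall R p Hp v u C U v0 u0 uU C0 MC v1 veig Hirr Hlin _ eK0.
  exists N.+1 => n hn; apply/andP; split.
    apply: le_trans (ereal_sup_ubound _); last by exists (zero R, 0%N).
    have [_ _ Qz] := Qsup_props Hp n (zero_cube R).
    by rewrite lee_fin divr_ge0.
  apply: ge_ereal_sup => _ [[s i] [sc _] <-] /=.
  have [Q0 QQ Qs0] := Qsup_props Hp n sc.
  have Qs_le : Qsup p n s <= e' / (K%:R + 1).
    apply: ge_sup; first by exists (Qn p n s 0%N), 0%N.
    move=> _ [j _ <-].
    case: n hn {QQ Q0 Qs0} => [//|n'] hn.
    apply: le_trans (HN n' hn j); rewrite /Qn lerD2l lerN2.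
    apply: Fn_mono => //; first exact: (zero_cube R).
    by move=> k; case/andP: (sc k).
  have [E0 Eb] := andP (eps1_bound Hp n sc (ltW e'0) (HKi i)).
  rewrite lee_fin ger0_norm //.
  have := Qs0; rewrite le_eqVlt => /orP[/eqP <-|Qsp]; first by rewrite invr0 mulr0 ltW.
  rewrite ler_pdivrMr //; apply: le_trans Eb _; rewrite mulrC ler_wpM2r //.
  have hK : K%:R * Qsup p n s <= e'.
    apply: le_trans (ler_wpM2l (ler0n _ _) Qs_le) _.
    rewrite mulrCA; apply: ler_piMr; first exact: ltW.
    by rewrite ler_pdivrMr ?ltr_wpDl ?ler0n // mul1r lerDl.
  by rewrite [leRHS](splitr e) lerD2l.
apply/fine_cvgP; split.
  have [N HN] := key 1 ltr01; exists N => // n /HN /andP[a b].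
  by rewrite ge0_fin_numE // (le_lt_trans b) ?ltry.
apply/cvgr0Pnorm_lt => e e0.
have [N HN] := key (e / 2) (divr_gt0 e0 (ltr0Sn _ 1)).
exists N => // n /HN /andP[a b] /=.
have f : G n \is a fin_num by rewrite ge0_fin_numE // (le_lt_trans b) ?ltry.
rewrite -(fineK f) lee_fin in b; rewrite -(fineK f) lee_fin in a.
rewrite ger0_norm //; apply: le_lt_trans b _.
by rewrite ltr_pdivrMr // ltr_pMr // ltr1n.
Qed.
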